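(* (i) For every integer $n\ge 0$, $D_{n,3}(1,\tfrac14)=\dfrac{3n-1}{2^n}$ in $\mathbb{F}_q$, and for every $y\in\mathbb{F}_{q^2}$ with $y\ne\tfrac12$, $$D_{n,3}(1,y(1-y))=\frac{(2-y)y^n-(y+1)(1-y)^n}{2y-1}.$$ (ii) If $n_1,n_2$ are positive integers with $n_1\equiv n_2\pmod{q^2-1}$, then $D_{n_1,3}(1,x_0)=D_{n_2,3}(1,x_0)$ for every $x_0\in\mathbb{F}_q\setminus\{\tfrac14\}$.
   Context: Let $p>3$ be prime, $q=p^e$ ($e\ge1$), $\mathbb{F}_q$ the field with $q$ elements and $\mathbb{F}_{q^2}$ its quadratic extension. For $n\ge 1$ and $a\in\mathbb{F}_q$, $D_{n,3}(a,x)=\sum_{i=0}^{\lfloor n/2\rfloor}\frac{n-3i}{n-i}\binom{n-i}{i}(-x)^i a^{n-2i}$, where each coefficient $\frac{n-3i}{n-i}\binom{n-i}{i}$ is an integer read modulo $p$; and $D_{0,3}(a,x)=-1$. The polynomial $D_{n,3}(1,x)\in\mathbb{F}_q[x]$ is evaluated at elements of $\mathbb{F}_{q^2}$. *)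

(* Defs.v *)
From HB Require Import structures.
From mathcomp Require Import all_boot all_order all_algebra all_field.
Set Implicit Arguments. Unset Strict Implicit. Unset Printing Implicit Defensive.
Import Order.TTheory GRing.Theory Num.Theory.
Local Open Scope ring_scope.

(* The integer coefficient (n-3i)/(n-i) * C(n-i,i) of D_{n,3}.
   The division is exact for 0 <= i <= n/2, n >= 1 (integer division divz). *)
Definition Dcoef (n i : nat) : int :=
  (((n%:Z - (3 * i)%N%:Z) * ('C(n - i, i))%:Z) %/ (n - i)%N%:Z)%Z.

(* D_{n,3}(a,x) as a polynomial in x over a commutative ring R,
   coefficients read in R (i.e. modulo the characteristic);
   D_{0,3}(a,x) = -1. *)
Definition Dpoly (R : comNzRingType) (n : nat) (a : R) : {poly R} :=
  if n is 0 then -1 else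
  \sum_(i < n./2.+1) ((Dcoef n i)%:~R * a ^+ (n - 2 * i)) *: (- 'X) ^+ i.

(* Main.v *)
Require Import Defs.
From HB Require Import structures.
From mathcomp Require Import all_boot all_order all_algebra all_field.
From mathcomp Require Import zify ring.
Import GRing.Theory.
Local Open Scope ring_scope.

Lemma bin_rec n j : 'C(n.+1 - j, j.+1) = ('C(n - j, j.+1) + 'C(n - j, j))%N.
Proof.
case: (leqP j n) => hj.
  by rewrite subSn // binS.
have h1 : (n.+1 - j = 0)%N by lia.
have h2 : (n - j = 0)%N by lia.
rewrite h1 h2 !bin0n; case: j hj {h1 h2} => //.
Qed.

Lemma sum_shrink (R : nmodType) (M N : nat) (f : nat -> R) : (M <= N)%N ->
  (forall i, (M <= i < N)%N -> f i = 0) ->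
  \sum_(i < N) f i = \sum_(i < M) f i.
Proof.
move=> MN hf; rewrite (big_ord_widen N f MN) [RHS]big_mkcond /=.
apply: eq_bigr => i _; case: ifP => // hi; rewrite hf //.
by rewrite ltn_ord andbT leqNgt hi.
Qed.

Section Ring.
Variable R : comNzRingType.

Definition E (N n : nat) (x : R) := \sum_(i < N) ('C(n - i, i))%:R * (- x) ^+ i.
Definition G n x := E n.+1 n x.

Lemma E_widen N n x : (n < N)%N -> E N.+1 n x = E N n x.
Proof.
move=> h; rewrite /E big_ord_recr /= bin_small ?mul0r ?addr0 //; lia.
Qed.

Lemma E_rec N n x : E N.+1 n.+2 x = E N.+1 n.+1 x - x * E N n x.
Proof.
rewrite /E !big_ord_recl /= !subn0 !bin0 -addrA; congr (_ + _).
rewrite mulr_sumr -sumrB; apply: eq_bigr => j _.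
rewrite /bump /= add1n !subSS bin_rec natrD mulrDl.
by rewrite exprS; ring.
Qed.

Lemma G_rec n x : G n.+2 x = G n.+1 x - x * G n x.
Proof. by rewrite /G E_rec (@E_widen n.+2 n.+1) // (@E_widen n.+1 n). Qed.

Lemma G0 x : G 0 x = 1.
Proof. by rewrite /G /E big_ord1 bin0 expr0 mulr1. Qed.

Lemma G1 x : G 1 x = 1.
Proof. by rewrite /G /E big_ord_recl big_ord1 /= bin0 bin0n expr0 mul0r mulr1 addr0. Qed.

End Ring.
Arguments E {R}. Arguments G {R}.
Lemma Dcoef0 m : (0 < m)%N -> Dcoef m 0 = 1.
Proof.
move=> hm; rewrite /Dcoef muln0 subn0 bin0 subr0 mulr1 divzz.
by rewrite eqz_nat -lt0n hm.
Qed.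

Lemma Dcoef_big m i : (m./2 < i)%N -> Dcoef m i = 0.
Proof.
move=> hi; rewrite /Dcoef bin_small ?mulr0 ?div0z //.
have := leq_trunc_div m 2 => ?; rewrite -divn2 in hi; lia.
Qed.

Lemma DcoefS m j : (2 <= m)%N -> (j < m)%N ->
  Dcoef m j.+1 = ('C(m - j.+1, j.+1))%:Z - 2 * ('C(m.-2 - j, j))%:Z.
Proof.
move=> hm hj; rewrite /Dcoef.
case: (ltnP j.+1 m) => hjm.
  have hd := mul_bin_diag (m - j.+1) j.
  have e : ((m - j.+1).-1 = m.-2 - j)%N by lia. rewrite e in hd.
  move: hd; set a := 'C(m - j.+1, j.+1); set b := 'C(m.-2 - j, j) => hd.
  have -> : (m%:Z - (3 * j.+1)%N%:Z) * a%:Z = ('C(m - j.+1, j.+1)%:Z - 2 * b%:Z) * (m - j.+1)%N%:Z.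
    clear -hd hjm; nia.
  by rewrite mulzK // eqz_nat; lia.
have -> : j.+1 = m by lia.
have -> : (m.-2 - j = 0)%N by lia.
rewrite subnn !bin_small ?mulr0 ?div0z //; lia.
Qed.

Lemma Dpoly_eval2 (R : comNzRingType) n (x : R) :
  (Dpoly n.+2 1).[x] = G n.+2 x + 2 * x * G n x.
Proof.
rewrite /Dpoly horner_sum.
under eq_bigr => i _ do rewrite hornerZ horner_exp hornerN hornerX expr1n mulr1.
rewrite -(@sum_shrink _ _ n.+3 (fun i : nat => (Dcoef n.+2 i)%:~R * (-x)^+i)); last first.
- by move=> i /andP[hi _]; rewrite Dcoef_big // mul0r.
- by rewrite ltnS -divn2 leq_div.
rewrite big_ord_recl Dcoef0 //.
under eq_bigr => i _ do rewrite lift0 DcoefS //.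
rewrite /G -(@E_widen R n.+1 n) // /E [X in _ = X + _]big_ord_recl /=.
rewrite subn0 !bin0 -addrA; congr (_ + _).
under eq_bigr => i _ do rewrite intrB intrM -!pmulrn mulrBl.
rewrite sumrB; congr (_ + _); rewrite -sumrN mulr_sumr; apply: eq_bigr => i _.
by rewrite exprS; ring.
Qed.

Lemma Dpoly_eval0 (R : comNzRingType) (x : R) : (Dpoly 0 1).[x] = -1.
Proof. by rewrite /Dpoly hornerN hornerC. Qed.

Lemma Dpoly_eval1 (R : comNzRingType) (x : R) : (Dpoly 1 1).[x] = 1.
Proof.
by rewrite /Dpoly big_ord1 Dcoef0 // hornerZ expr0 hornerC !mulr1.
Qed.

Lemma map_Dpoly (F : fieldType) (L : fieldExtType F) n :
  map_poly (in_alg L) (Dpoly n (1:F)) = Dpoly n 1.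
Proof.
case: n => [|n]; rewrite /Dpoly; first by rewrite rmorphN rmorph1.
rewrite rmorph_sum; apply: eq_bigr => i _.
rewrite -!mul_polyC rmorphM rmorphXn rmorphN /= map_polyX map_polyC /=.
by rewrite -in_algE rmorphM rmorph_int rmorphXn rmorph1.
Qed.

Lemma two_step (R : comNzRingType) (x : R) (f : nat -> R) :
  f 0%N = G 0 x -> f 1%N = G 1 x ->
  (forall n, f n.+2 = f n.+1 - x * f n) -> forall n, G n x = f n.
Proof.
move=> h0 h1 hr n.
suff : G n x = f n /\ G n.+1 x = f n.+1 by case.
elim: n => [|n [IH1 IH2]]; first by [].
by split => //; rewrite G_rec hr IH1 IH2.
Qed.

Lemma G_quarter (F : fieldType) (h2 : (2:F) != 0) n :
  G n (4^-1 : F) = (n.+1)%:R / 2 ^+ n.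
Proof.
move: n; apply: (@two_step _ _ (fun n : nat => (n.+1)%:R / 2 ^+ n)) => [||n] /=.
- by rewrite G0 expr0 divr1.
- by rewrite G1 expr1 divff.
rewrite !exprS -!natr1.
have h4 : (4:F) != 0.
  have -> : (4:F) = 2 * 2 by ring.
  exact: mulf_neq0.
field.
by rewrite h4 h2 add0r expf_neq0.
Qed.

Lemma G_y (K : fieldType) (y : K) (hy : 2 * y - 1 != 0) n :
  G n (y * (1 - y)) = (y ^+ n.+1 - (1 - y) ^+ n.+1) / (2 * y - 1).
Proof.
move: n; apply: (@two_step _ _ (fun n : nat => (y ^+ n.+1 - (1 - y) ^+ n.+1) / (2 * y - 1))) => [||n] /=.
- by rewrite G0 expr1 (_ : y - (1 - y) = 2 * y - 1) ?divff //; ring.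
- by rewrite G1 (_ : y ^+ 2 - (1 - y) ^+ 2 = 2 * y - 1) ?divff //; ring.
rewrite !exprS; field; done.
Qed.

Lemma D_quarter (F : fieldType) (h2 : (2:F) != 0) n :
  (Dpoly n (1:F)).[4^-1] = ((3 * n)%:R - 1) / 2 ^+ n.
Proof.
have h4 : (4:F) != 0.
  have -> : (4:F) = 2 * 2 by ring.
  exact: mulf_neq0.
case: n => [|[|n]].
- by rewrite Dpoly_eval0 muln0 sub0r expr0 divr1.
- rewrite Dpoly_eval1 expr1; field; done.
rewrite Dpoly_eval2 !G_quarter // !exprS; field.
by rewrite h4 h2 expf_neq0.
Qed.

Lemma D_y (K : fieldType) (y : K) (hy : 2 * y - 1 != 0) n :
  (Dpoly n (1:K)).[y * (1 - y)] =
  ((2 - y) * y ^+ n - (y + 1) * (1 - y) ^+ n) / (2 * y - 1).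
Proof.
case: n => [|[|n]].
- rewrite Dpoly_eval0 !expr0; field; done.
- rewrite Dpoly_eval1 !expr1; field; done.
rewrite Dpoly_eval2 !G_y // !exprS; field; done.
Qed.

Section S.
Variables (F : finFieldType) (L : fieldExtType F).
Let finL := FinFieldExtType L.
Lemma cardL : #|finL| = (#|F| ^ \dim {:L})%N.
Proof.
have := card_vspace (fullv : {vspace (finvect_type L)}).
have := @card_vspacef F (finvect_type L).
move=> -> ->. done.
Qed.

Lemma sqrt_exists (d : F) : odd #|F| -> \dim {:L} = 2%N ->
  exists r : L, r ^+ 2 = d%:A.
Proof.
move=> oq hd.
have [->|dn0] := eqVneq d 0; first by exists 0; rewrite scale0r expr0n.
pose c : finL := d%:A.
have [k hk] : exists k, #|F| = (k.*2).+1.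
  by exists (#|F|./2); rewrite -[in LHS](odd_double_half #|F|) oq.
pose h := (k.*2 * k.+1)%N.
have hQ : (#|finL| = (2 * h).+1)%N.
  rewrite cardL hd hk /h; rewrite -!mul2n; lia.
have ch : c ^+ h = 1.
  rewrite /c /h exprM -in_algE -rmorphXn.
  have : d ^+ #|F| = d := expf_card d.
  rewrite hk exprS => H; have H2 : d * d ^+ k.*2 = d * 1 by rewrite mulr1. rewrite (mulfI dn0 H2).
  by rewrite rmorph1 expr1n.
pose P : {poly finL} := 'X^2 - c%:P.
have hP : P %| \prod_(x : finL) ('X - x%:P).
  rewrite -finField_genPoly hQ.
  have -> : 'X^((2 * h).+1) - 'X = 'X * (('X^2) ^+ h - (c%:P) ^+ h) :> {poly finL}.
    rewrite -rmorphXn /= ch -exprM mulrBr mulr1 -exprS //.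
  by apply: dvdp_mull; rewrite subrXX dvdp_mulr.
have [m hm] := dvdp_prod_XsubC hP.
have := eqp_size hm; rewrite size_prod_XsubC /P size_XnsubC //.
case E: (mask m (index_enum finL)) => [|x s] //= _.
exists x.
have : root P x.
  by rewrite (eqp_root hm) E root_prod_XsubC mem_head.
by rewrite /P rootE !hornerE subr_eq0 => /eqP.
Qed.
End S.

Lemma pow_period (F : finFieldType) (L : fieldExtType F) (a : L) (Q : nat) :
  Q = (#|F| ^ \dim {:L})%N -> (0 < Q)%N ->
  forall n k, (0 < n)%N -> a ^+ (n + k * Q.-1) = a ^+ n.
Proof.
move=> hQ Qp n k hn.
have ferm : a ^+ Q = a by rewrite hQ; apply/eqP; rewrite -Fermat's_little_theorem memvf.
elim: k => [|k IH]; first by rewrite mul0n addn0.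
have -> : (n + k.+1 * Q.-1 = (n + k * Q.-1).-1 + Q)%N.
  move: IH => _; case: Q hQ Qp ferm => // Q' _ _ _; rewrite mulSn /=.
  case: n hn => // n' _; lia.
rewrite exprD ferm -IH; case: n hn {IH} => // n' _.
by rewrite addSn /= -exprSr.
Qed.

Theorem theorem2p4 (p e : nat) (F : finFieldType) (L : fieldExtType F)
  (hp : prime p) (hp3 : (3 < p)%N) (he : (0 < e)%N)
  (hchar : p \in [pchar F]) (hcard : #|F| = (p ^ e)%N)
  (hdim : \dim {:L} = 2%N) :
  (* (i) *)
  (forall n : nat,
     (Dpoly n (1 : F)).[4^-1] = ((3 * n)%:R - 1) / 2 ^+ n) /\
  (forall (n : nat) (y : L), y != 2^-1 ->
     (map_poly (GRing.in_alg L) (Dpoly n (1 : F))).[y * (1 - y)]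
       = ((2 - y) * y ^+ n - (y + 1) * (1 - y) ^+ n) / (2 * y - 1)) /\
  (* (ii) *)
  (forall n1 n2 : nat, (0 < n1)%N -> (0 < n2)%N ->
     n1 = n2 %[mod (p ^ e) ^ 2 - 1] ->
     forall x0 : F, x0 != 4^-1 ->
       (Dpoly n1 (1 : F)).[x0] = (Dpoly n2 (1 : F)).[x0]).
Proof.
have h2F : (2:F) != 0.
  by rewrite -(dvdn_pcharf hchar 2); apply/negP => /(dvdn_leq) => /(_ isT); lia.
have h2L : (2:L) != 0 by rewrite -(rmorph_nat (in_alg L)) fmorph_eq0.
have hyL : forall y : L, y != 2^-1 -> 2 * y - 1 != 0.
  move=> y hy; apply: contra hy; rewrite subr_eq0 => /eqP h.
  by apply/eqP; rewrite -[y](mulKf h2L) h mulr1.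
have partB : forall (n : nat) (y : L), y != 2^-1 ->
     (map_poly (GRing.in_alg L) (Dpoly n (1 : F))).[y * (1 - y)]
       = ((2 - y) * y ^+ n - (y + 1) * (1 - y) ^+ n) / (2 * y - 1).
  by move=> n y hy; rewrite map_Dpoly D_y // hyL.
split; first by move=> n; apply: D_quarter.
split; first exact: partB.
move=> n1 n2 h1 h2 hmod x0 hx0.
have oq : odd #|F|.
  rewrite hcard oddX; case: (even_prime hp) => [hp2|->]; last by rewrite orbT.
  by rewrite hp2 in hp3.
pose d := 1 - 4 * x0.
have dn0 : d != 0.
  apply: contra hx0; rewrite /d subr_eq0 => /eqP h.
  have h4 : (4:F) != 0.
    have -> : (4:F) = 2 * 2 by ring.
    exact: mulf_neq0.
  by rewrite -(mulKf h4 x0) -h mulr1.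
have [r hr] := @sqrt_exists F L d oq hdim.
pose y := (1 + r) / 2.
have hyx : y * (1 - y) = in_alg L x0.
  have -> : y * (1 - y) = (1 - r ^+ 2) / 4.
    rewrite /y; field.
    have -> : (4:L) = 2 * 2 by ring.
    by rewrite mulf_neq0.
  rewrite hr -in_algE /d rmorphB rmorphM rmorph1 rmorph_nat.
  field. have -> : (4:L) = 2 * 2 by ring.
  by rewrite mulf_neq0.
have hy : y != 2^-1.
  apply/eqP => hy.
  have e1 : 1 + r = 1 by rewrite -(divfK h2L (1 + r)) -/y hy mulVf.
  have r0 : r = 0.
    by move: e1 => /eqP; rewrite -subr_eq0 addrAC subrr add0r => /eqP.
  have : d%:A == 0 :> L by rewrite -hr r0 expr0n.
  by rewrite scaler_eq0 oner_eq0 orbF (negPf dn0).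
apply: (fmorph_inj (in_alg L)).
rewrite -!horner_map /= -[x0%:A]in_algE -hyx !partB //.
set Q := (#|F| ^ \dim {:L})%N.
have Qp : (0 < Q)%N by rewrite /Q expn_gt0; apply/orP; left; apply/card_gt0P; exists 0.
have QE : Q.-1 = ((p ^ e) ^ 2 - 1)%N by rewrite /Q hcard hdim; lia.
suff hpow : forall a : L, a ^+ n1 = a ^+ n2 by rewrite !hpow.
move=> a.
wlog le12 : n1 n2 h1 h2 hmod / (n1 <= n2)%N.
  move=> H; case: (leqP n1 n2) => h; first exact: H.
  symmetry; apply: H => //; try by rewrite hmod.
  1: exact: ltnW.
have : (n2 == n1 %[mod Q.-1]) by rewrite QE hmod.
rewrite eqn_mod_dvd // => /dvdnP[k hk].
have -> : n2 = (n1 + k * Q.-1)%N by rewrite -hk; lia.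
by rewrite (@pow_period F L a Q erefl Qp n1 k h1).
Qed.
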